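(* Let $G$ be a directed acyclic contractor network and let $d>0$ be the maximum number of edges in a directed path of $G$. For $S\subseteq\mathcal V$, $\mathbf y\in\{0,1\}^S$ and $\mathbf z\in\{0,1\}^{S'}$ with $S'\supseteq\bigcup_{i\in S}\delta_{\mathrm{in}}(i)$, put $$q_S(\mathbf y\mid\mathbf z)=\prod_{i\in S}p_i(\mathbf z)^{y_i}\big(1-p_i(\mathbf z)\big)^{1-y_i},\qquad p_i(\mathbf z)=(1-\alpha_i)r_i+\alpha_i\sum_{j\in\delta_{\mathrm{in}}(i)}w_{ij}z_j.$$ Then for every $t\ge d$ and every $\mathbf x\in\{0,1\}^n$, $\Pr(\mathbf X^t=\mathbf x)=\pi(\mathbf x)$, and $$\Pr(\mathbf X^t=\mathbf x)=\sum_{\mathbf z^1\in\{0,1\}^{\Delta^1}}\cdots\sum_{\mathbf z^d\in\{0,1\}^{\Delta^d}}q_{\mathcal V}(\mathbf x\mid\mathbf z^1)\prod_{k=1}^{d-1}q_{\Delta^k}(\mathbf z^k\mid\mathbf z^{k+1})\prod_{i\in\Delta^d}r_i^{z^d_i}(1-r_i)^{1-z^d_i},$$ where $\mathbf z^k$ plays the role of the state of the nodes of $\Delta^k$ at time $t-k$. (Here every node of $\Delta^d$ is a pure principal, and $\delta_{\mathrm{in}}(i)\subseteq\Delta^{k+1}$ for $i\in\Delta^k$, so all terms are well defined.)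
   Context: A contractor network is a finite directed graph $G=(\mathcal V,\mathcal E)$ with $n=|\mathcal V|$ nodes, without multiple edges, in which every node has at least one incident edge; here $G$ is assumed acyclic (no directed cycles and no self-loops). For $i\in\mathcal V$ let $\delta_{\mathrm{in}}(i)=\{j:(j,i)\in\mathcal E\}$ and $\delta_{\mathrm{out}}(i)=\{k:(i,k)\in\mathcal E\}$. A node $i$ is a pure principal if $\delta_{\mathrm{in}}(i)=\emptyset$, a pure obligee if $\delta_{\mathrm{out}}(i)=\emptyset$, and an intermediary otherwise. Each edge $(j,i)\in\mathcal E$ carries a weight $w_{ij}>0$; $w_{ij}=0$ if $(j,i)\notin\mathcal E$; for every $i$ with $\delta_{\mathrm{in}}(i)\neq\emptyset$, $\sum_{j\in\delta_{\mathrm{in}}(i)}w_{ij}=1$. Risk scores: $r_i\in(0,1)$ if $i$ is not a pure obligee, $r_i=0$ for pure obligees. Propagation parameters: $\alpha_i=0$ for pure principals, $\alpha_i=1$ for pure obligees, $\alpha_i\in(0,1)$ for intermediaries. Failure process $(\mathbf X^t)_{t\in\mathbb N}$ on $\{0,1\}^n$: independent $X_i^0\sim\mathrm{Bernoulli}(r_i)$; for $t\ge0$, conditionally on $(\mathbf X^0,\dots,\mathbf X^t)$ the $X_i^{t+1}$ are independent with $X_i^{t+1}\sim\mathrm{Bernoulli}\big((1-\alpha_i)r_i+\alpha_i\sum_{j\in\delta_{\mathrm{in}}(i)}w_{ij}X_j^t\big)$; $\pi(\mathbf x)=\lim_t\Pr(\mathbf X^t=\mathbf x)$ is its stationary distribution.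 In-neighbor layers: $\Delta^1=\bigcup_{i\in\mathcal V}\delta_{\mathrm{in}}(i)$ and, for $k>1$, $\Delta^k=\bigcup_{i\in\Delta^{k-1}}\delta_{\mathrm{in}}(i)$; equivalently $\Delta^k$ is the set of nodes from which some directed path with $k$ edges starts. *)

(* Defs.v *)
From HB Require Import structures.
From mathcomp Require Import all_boot all_order all_algebra.
From mathcomp Require Import all_classical all_reals all_analysis.
Set Implicit Arguments. Unset Strict Implicit. Unset Printing Implicit Defensive.
Import Order.TTheory GRing.Theory Num.Theory numFieldNormedType.Exports.
Local Open Scope ring_scope.

(* Nodes are 'I_n ; e j i = true  iff  (j,i) is an edge.
   w i j = weight of edge (j,i);  a state is x : {ffun 'I_n -> bool}. *)

Section Net.
Variables (R : realType) (n : nat) (e : rel 'I_n)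
  (w : 'I_n -> 'I_n -> R) (r alpha : 'I_n -> R).

Definition din (i : 'I_n) : {set 'I_n} := [set j | e j i].
Definition dout (i : 'I_n) : {set 'I_n} := [set k | e i k].

(* Delta 0 = V, Delta (k+1) = union of in-neighbourhoods of Delta k;
   so Delta k (k >= 1) is the paper's Delta^k. *)
Fixpoint Delta (k : nat) : {set 'I_n} :=
  if k is k'.+1 then \bigcup_(i in Delta k') din i else [set: 'I_n].

Definition pfail (i : 'I_n) (z : {ffun 'I_n -> bool}) : R :=
  (1 - alpha i) * r i + alpha i * \sum_(j in din i) w i j * (z j)%:R.

Definition qcond (S : {set 'I_n}) (y z : {ffun 'I_n -> bool}) : R :=
  \prod_(i in S) (pfail i z ^+ y i * (1 - pfail i z) ^+ (1 - y i)).

Definition init_law (S : {set 'I_n}) (x : {ffun 'I_n -> bool}) : R :=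
  \prod_(i in S) (r i ^+ x i * (1 - r i) ^+ (1 - x i)).

(* law t x = Pr(X^t = x) for the Markov chain of the failure process *)
Fixpoint law (t : nat) (x : {ffun 'I_n -> bool}) : R :=
  if t is t'.+1 then \sum_(y : {ffun 'I_n -> bool}) law t' y * qcond [set: 'I_n] x y
  else init_law [set: 'I_n] x.

Definition stationary (x : {ffun 'I_n -> bool}) : R :=
  lim ((fun t => law t x) @ \oo)%classic.

(* the k-th (k = 1..d) state in a tuple z = (z^1, ..., z^d) *)
Definition zat (d : nat) (z : {ffun 'I_d -> {ffun 'I_n -> bool}}) (k : nat)
  : {ffun 'I_n -> bool} :=
  if insub k.-1 is Some o then z o else [ffun=> false].

(* z^k in {0,1}^{Delta^k}: encoded as states vanishing outside Delta^k *)
Definition supported (d : nat) (z : {ffun 'I_d -> {ffun 'I_n -> bool}}) : bool :=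
  [forall k : 'I_d, forall i : 'I_n, (i \notin Delta k.+1) ==> ~~ z k i].

Definition formula (d : nat) (x : {ffun 'I_n -> bool}) : R :=
  \sum_(z : {ffun 'I_d -> {ffun 'I_n -> bool}} | supported z)
     (qcond [set: 'I_n] x (zat z 1)
      * (\prod_(1 <= k < d) qcond (Delta k) (zat z k) (zat z k.+1))
      * init_law (Delta d) (zat z d)).

End Net.

Definition dag_network (R : realType) (n : nat) (e : rel 'I_n)
  (w : 'I_n -> 'I_n -> R) (r alpha : 'I_n -> R) : Prop :=
  [/\ (forall i j, e i j -> ~~ connect e j i),
      (forall i, exists j, e i j || e j i),
      ((forall i j, (e j i -> 0 < w i j) /\ (~~ e j i -> w i j = 0)) /\
       (forall i, din e i != finset.set0 -> \sum_(j in din e i) w i j = 1)),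
      ((forall i, dout e i != finset.set0 -> 0 < r i < 1) /\ (forall i, dout e i = finset.set0 -> r i = 0))
    & ((forall i, din e i = finset.set0 -> alpha i = 0) /\
       (forall i, dout e i = finset.set0 -> alpha i = 1) /\
       (forall i, din e i != finset.set0 -> dout e i != finset.set0 -> 0 < alpha i < 1))].

Definition max_path_len (n : nat) (e : rel 'I_n) (d : nat) : Prop :=
  (exists (x : 'I_n) (p : seq 'I_n), path e x p /\ size p = d) /\
  (forall (x : 'I_n) (p : seq 'I_n), path e x p -> (size p <= d)%N).

(* Main.v *)
Require Import Defs.
From HB Require Import structures.
From mathcomp Require Import all_boot all_order all_algebra.
From mathcomp Require Import all_classical all_reals all_analysis.
From mathcomp Require Import ring.
Import Order.TTheory GRing.Theory Num.Theory numFieldNormedType.Exports.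
Local Open Scope ring_scope.

Section Proof.
Variables (R : realType) (n : nat) (e : rel 'I_n)
  (w : 'I_n -> 'I_n -> R) (r alpha : 'I_n -> R).

Local Notation T := {ffun 'I_n -> bool}.

Definition res (S : {set 'I_n}) (x : T) : T := [ffun i => (i \in S) && x i].

Lemma resE S x i : res S x i = (i \in S) && x i.
Proof. by rewrite ffunE. Qed.

Lemma res_eqP S x y : res S y = y ->
  (res S x == y) = [forall i, (i \in S) ==> (x i == y i)].
Proof.
move=> Hy; apply/eqP/forallP => [<- i|H].
  by apply/implyP => iS; rewrite resE iS.
apply/ffunP => i; rewrite resE; case: (boolP (i \in S)) => iS /=.
  by have := H i; rewrite iS /= => /eqP.
by rewrite -Hy resE (negbTE iS).
Qed.

Lemma marg (g : 'I_n -> bool -> R) (Hg : forall i, g i true + g i false = 1)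
  (S : {set 'I_n}) (y : T) : res S y = y ->
  \sum_(x | res S x == y) \prod_i g i (x i) = \prod_(i in S) g i (y i).
Proof.
move=> Hy.
transitivity (\sum_(x : T) \prod_i (if i \in S then g i (x i) * (x i == y i)%:R else g i (x i))).
  rewrite [RHS](bigID (fun x => res S x == y)) /= [X in _ = _ + X]big1 ?addr0.
    apply: eq_bigr => x; rewrite res_eqP // => /forallP H.
    apply: eq_bigr => i _; case: ifP => // iS.
    by have := H i; rewrite iS /= => /eqP ->; rewrite eqxx mulr1.
  move=> x; rewrite res_eqP // => /forallPn [i]; rewrite negb_imply => /andP [iS ne].
  by rewrite (bigD1 i) //= iS (negbTE ne) mulr0 mul0r.
rewrite -(bigA_distr_bigA (fun i b => if i \in S then g i b * (b == y i)%:R else g i b)).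
rewrite [RHS]big_mkcond; apply: eq_bigr => i _; rewrite big_bool.
case: ifP => iS; last by rewrite /= Hg.
by case: (y i); rewrite /= ?mulr1 ?mulr0 ?addr0 ?add0r.
Qed.

Local Notation law := (law e w r alpha).
Local Notation qcond := (qcond e w r alpha).
Local Notation pfail := (pfail e w r alpha).

Definition mlaw t S y := \sum_(x | res S x == y) law t x.
Definition DS (S : {set 'I_n}) := \bigcup_(i in S) din e i.

Lemma big_setT_all (F : 'I_n -> R) : \prod_(i in [set: 'I_n]%SET) F i = \prod_i F i.
Proof. by apply: eq_bigl => i; rewrite finset.in_setT. Qed.

Lemma gq_sum z i : pfail i z ^+ true * (1 - pfail i z) ^+ (1 - true)
   + pfail i z ^+ false * (1 - pfail i z) ^+ (1 - false) = 1.
Proof. by rewrite /= expr1 expr0 mulr1 mul1r addrC subrK. Qed.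

Lemma gr_sum i : r i ^+ true * (1 - r i) ^+ (1 - true)
   + r i ^+ false * (1 - r i) ^+ (1 - false) = 1.
Proof. by rewrite /= expr1 expr0 mulr1 mul1r addrC subrK. Qed.

Lemma qcondT x z : qcond [set: 'I_n]%SET x z =
  \prod_i (pfail i z ^+ x i * (1 - pfail i z) ^+ (1 - x i)).
Proof. exact: big_setT_all. Qed.

Lemma initT x : init_law r [set: 'I_n]%SET x =
  \prod_i (r i ^+ x i * (1 - r i) ^+ (1 - x i)).
Proof. exact: big_setT_all. Qed.

Lemma qcond_marg S y z : res S y = y ->
  \sum_(x | res S x == y) qcond [set: 'I_n]%SET x z = qcond S y z.
Proof.
move=> Hy; under eq_bigr => x _ do rewrite qcondT.
exact: (marg (fun i b => pfail i z ^+ b * (1 - pfail i z) ^+ (1 - b)) (gq_sum z)).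
Qed.

Lemma R0 S y : res S y = y -> mlaw 0 S y = init_law r S y.
Proof.
move=> Hy; rewrite /mlaw /=.
under eq_bigr => x _ do rewrite initT.
exact: (marg (fun i b => r i ^+ b * (1 - r i) ^+ (1 - b)) gr_sum).
Qed.

Lemma pfail_res (S : {set 'I_n}) i z : i \in S -> pfail i (res (DS S) z) = pfail i z.
Proof.
move=> iS; rewrite /Defs.pfail; congr (_ + _ * _); apply: eq_bigr => j jin.
rewrite resE; suff -> : j \in DS S by [].
by apply/bigcupP; exists i.
Qed.

Lemma qcond_res (S : {set 'I_n}) y z : qcond S y (res (DS S) z) = qcond S y z.
Proof. by apply: eq_bigr => i iS; rewrite pfail_res. Qed.

Lemma R1 t (S : {set 'I_n}) y : res S y = y ->
  mlaw t.+1 S y = \sum_(u | res (DS S) u == u) mlaw t (DS S) u * qcond S y u.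
Proof.
move=> Hy; rewrite /mlaw /=.
rewrite exchange_big /=.
under eq_bigr do rewrite -big_distrr /= qcond_marg // -qcond_res.
rewrite (partition_big (res (DS S)) (fun u => res (DS S) u == u)) /=; last first.
  by move=> z _; apply/eqP/ffunP => i; rewrite !resE andbA andbb.
apply: eq_bigr => u _; rewrite big_distrl /=; apply: eq_bigr => z /eqP <-.
by [].
Qed.

Local Notation Delta := (Delta e).
Definition u0 : T := [ffun=> false].

Lemma res0 (u : T) : res finset.set0 u = u0.
Proof. by apply/ffunP => i; rewrite resE !ffunE inE. Qed.

Lemma sum_res0 (F : T -> R) : \sum_(u : T | res finset.set0 u == u) F u = F u0.
Proof.
rewrite (eq_bigl (pred1 u0)) ?big_pred1_eq // => u /=.
by rewrite res0 eq_sym.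
Qed.

Lemma DS0 : DS finset.set0 = finset.set0.
Proof. by rewrite /DS big_set0. Qed.

Lemma mass s : mlaw s finset.set0 u0 = 1.
Proof.
elim: s => [|s IH].
  by rewrite R0 ?res0 // /init_law big_set0.
rewrite R1 ?res0 // DS0 sum_res0 IH mul1r.
by rewrite /Defs.qcond big_set0.
Qed.

Lemma Delta_path k j : j \in Delta k -> exists p, path e j p /\ size p = k.
Proof.
elim: k j => [|k IH] j /=; first by move=> _; exists [::].
move=> /bigcupP [i /IH [p [Hp Hs]]]; rewrite inE => eji.
by exists (i :: p); rewrite /= eji Hp Hs.
Qed.

Lemma Delta_end d : max_path_len e d -> Delta d.+1 = finset.set0.
Proof.
move=> [_ Hmax]; apply/setP => j; rewrite inE; apply/negP => /Delta_path [p [Hp Hs]].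
by have := Hmax _ _ Hp; rewrite Hs ltnn.
Qed.

Lemma m_final d : dag_network e w r alpha -> max_path_len e d ->
  forall s y, res (Delta d) y = y -> mlaw s (Delta d) y = init_law r (Delta d) y.
Proof.
move=> [_ _ _ _ [Ha0 _]] Hm s y Hy.
case: s => [|s]; first exact: R0.
have E : DS (Delta d) = finset.set0 by exact: Delta_end.
rewrite R1 // E sum_res0 mass mul1r.
apply: eq_bigr => i iD.
suff -> : pfail i u0 = r i by [].
have dini : din e i = finset.set0.
  apply/setP => j; rewrite finset.in_set0; apply/negP => ji.
  have : j \in DS (Delta d) by apply/bigcupP; exists i.
  by rewrite E finset.in_set0.
by rewrite /Defs.pfail Ha0 // subr0 mul1r mul0r addr0.
Qed.

Section Chain.
Variable d : nat.
Local Notation Z := {ffun 'I_d -> T}.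

Definition suppj (j : nat) (z : Z) :=
  supported e z && [forall k : 'I_d, (j <= k)%N ==> (z k == u0)].

Definition upd (z : Z) (k : 'I_d) (u : T) : Z :=
  [ffun k' => if k' == k then u else z k'].

Lemma res_supp (S : {set 'I_n}) (u : T) :
  (res S u == u) = [forall i, (i \notin S) ==> ~~ u i].
Proof.
apply/eqP/forallP => [<- i|H].
  by apply/implyP => iS; rewrite resE (negbTE iS).
apply/ffunP => i; rewrite resE; case: (boolP (i \in S)) => //= iS.
by have := H i; rewrite iS /= => /negbTE ->.
Qed.

Lemma supportedP (z : Z) :
  reflect (forall k : 'I_d, res (Delta k.+1) (z k) = z k) (supported e z).
Proof.
apply: (iffP forallP) => H k.
  by apply/eqP; rewrite res_supp; exact: H.
by rewrite -res_supp; apply/eqP.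
Qed.

Lemma resu0 (S : {set 'I_n}) : res S u0 = u0.
Proof. by apply/ffunP => i; rewrite resE ffunE andbF. Qed.

Lemma split_step (j : nat) (Hj : (j < d)%N) (G : Z -> R) :
  \sum_(z' | suppj j.+1 z') G z' =
  \sum_(z | suppj j z) \sum_(u | res (Delta j.+1) u == u) G (upd z (Ordinal Hj) u).
Proof.
set jo := Ordinal Hj.
rewrite (partition_big (fun z' => upd z' jo u0) (suppj j)); last first.
  move=> z' /andP [/supportedP Hs /forallP Ht]; apply/andP; split.
    apply/supportedP => k; rewrite ffunE; case: eqP => _; last exact: Hs.
    exact: resu0.
  apply/forallP => k; apply/implyP => le; rewrite ffunE; case: (k =P jo) => [_|/eqP ne] //.
  have le' : (j.+1 <= k)%N.
    rewrite ltn_neqAle le andbT; apply/eqP => E; apply: (negP ne); apply/eqP; apply: ord_inj; by rewrite -E.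
  by have := Ht k; rewrite le'.
apply: eq_bigr => z /andP [Hzs /forallP Hzt].
have zjo : z jo = u0 by apply/eqP; have := Hzt jo; rewrite leqnn.
rewrite (reindex_onto (upd z jo) (fun z' => z' jo)); last first.
  move=> z' /andP [_ /eqP Hz']; apply/ffunP => k; rewrite ffunE.
  case: eqP => [->|ne] //; rewrite -Hz' ffunE; by case: eqP.
apply: eq_bigl => u.
have -> : upd z jo u jo = u by rewrite ffunE eqxx.
rewrite eqxx andbT.
have -> : upd (upd z jo u) jo u0 = z.
  apply/ffunP => k; rewrite !ffunE; case: eqP => [->|//]; by rewrite zjo.
rewrite eqxx andbT.
apply/idP/idP.
  move=> /andP [/supportedP Hs _]; have := Hs jo; rewrite ffunE eqxx => ->.
  by [].
move=> /eqP Hu; apply/andP; split.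
  apply/supportedP => k; rewrite ffunE; case: eqP => [->|_] //.
  exact: (elimT (supportedP _) Hzs).
apply/forallP => k; apply/implyP => le; rewrite ffunE; case: (k =P jo) => [E|_].
  by move: le; rewrite E /= ltnn.
by have := Hzt k; rewrite (ltnW le).
Qed.
Lemma zat_upd (z : Z) (jo : 'I_d) u k : (0 < k)%N ->
  zat (upd z jo u) k = if k == jo.+1 then u else zat z k.
Proof.
move=> k0; rewrite /zat; case: insubP => [ o1 _ ho | nk].
  rewrite ffunE; congr (if _ then _ else _).
  by rewrite -val_eqE /= ho -[k in RHS](prednK k0) eqSS.
case: eqP => // E; by move: nk; rewrite E /= ltn_ord.
Qed.

Lemma zat_res (z : Z) k : supported e z -> (0 < k)%N ->
  res (Delta k) (zat z k) = zat z k.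
Proof.
move=> /supportedP Hs k0; rewrite /zat; case: insubP => [ o1 _ ho|_]; last exact: resu0.
by have := Hs o1; rewrite ho prednK.
Qed.

Definition PF j t x := \sum_(z | suppj j z)
  (qcond [set: 'I_n]%SET x (zat z 1) * \prod_(1 <= k < j) qcond (Delta k) (zat z k) (zat z k.+1)
   * mlaw (t - j) (Delta j) (zat z j)).

Lemma lawE t x : mlaw t [set: 'I_n]%SET x = law t x.
Proof.
rewrite /mlaw (eq_bigl (pred1 x)) ?big_pred1_eq // => y /=.
by congr (_ == _); apply/ffunP => i; rewrite resE finset.in_setT.
Qed.

Lemma stage1 (d0 : (0 < d)%N) t x : (0 < t)%N -> law t x = PF 1 t x.
Proof.
case: t => // t _.
rewrite -lawE R1; last by apply/ffunP => i; rewrite resE finset.in_setT.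
rewrite /PF (@split_step 0 d0).
rewrite (eq_bigl (pred1 [ffun=> u0])); last first.
  move=> z /=; apply/idP/eqP => [/andP [_ /forallP H]|->].
    by apply/ffunP => k; rewrite ffunE; apply/eqP; have := H k.
  apply/andP; split; last by apply/forallP => k; rewrite ffunE eqxx implybT.
  by apply/supportedP => k; rewrite ffunE resu0.
rewrite big_pred1_eq; apply: eq_bigr => u Hu.
rewrite !zat_upd //= big_geq // mulr1 subn1 /= mulrC.
by [].
Qed.
Lemma stepPF j t x (Hj : (j.+1 < d)%N) : (j.+2 <= t)%N -> PF j.+1 t x = PF j.+2 t x.
Proof.
move=> jt.
rewrite [RHS]/PF (@split_step j.+1 Hj) /PF.
set jo := Ordinal Hj.
have jov : nat_of_ord jo = j.+1 by [].
apply: eq_bigr => z /andP [Hzs Hzt].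
have -> : (t - j.+1 = (t - j.+2).+1)%N by rewrite subnSK.
rewrite R1 ?zat_res // big_distrr.
apply: eq_bigr => u Hu.
rewrite [in RHS]big_nat_recr //.
have -> : \prod_(1 <= k < j.+1) qcond (Delta k) (zat (upd z jo u) k) (zat (upd z jo u) k.+1)
   = \prod_(1 <= k < j.+1) qcond (Delta k) (zat z k) (zat z k.+1).
  apply: eq_big_nat => k /andP [k1 kj]; rewrite !zat_upd //.
  rewrite jov.
  have -> : (k == j.+2) = false by apply/negbTE; rewrite neq_ltn (ltn_trans kj).
  have -> : (k.+1 == j.+2) = false by apply/negbTE; rewrite eqSS neq_ltn kj.
  by [].
rewrite !zat_upd // jov.
have -> : (1 == j.+2) = false by [].
have -> : (j.+1 == j.+2) = false by apply/negbTE; rewrite neq_ltn ltnSn.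
rewrite eqxx.
change (Delta j.+2) with (DS (Delta j.+1)).
set A := qcond _ x _. set B := \prod_(_ <= _ < _) _. set C := mlaw _ _ u. set D := qcond _ (zat z j.+1) u.
rewrite /=. ring.
Qed.
Lemma stage (d0 : (0 < d)%N) t x j : (j.+1 <= d)%N -> (j.+1 <= t)%N -> law t x = PF j.+1 t x.
Proof.
elim: j => [|j IH] jd jt; first exact: stage1.
by rewrite IH ?(ltnW jd) ?(ltnW jt) // (@stepPF j t x jd).
Qed.

Lemma final : dag_network e w r alpha -> max_path_len e d -> (0 < d)%N ->
  forall t x, (d <= t)%N -> law t x = formula e w r alpha d x.
Proof.
move=> Hnet Hmax d0 t x dt.
have := @stage d0 t x d.-1; rewrite prednK // => ->//.
rewrite /PF /formula; apply: eq_big => z.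
  rewrite /suppj; have -> : [forall k : 'I_d, (d <= k)%N ==> (z k == u0)].
    by apply/forallP => k; rewrite leqNgt ltn_ord.
  by rewrite andbT.
move=> /andP [Hz _]; rewrite m_final // zat_res //.
Qed.
End Chain.
End Proof.

Theorem mainTheorem12 (R : realType) (n : nat) (e : rel 'I_n)
  (w : 'I_n -> 'I_n -> R) (r alpha : 'I_n -> R) (d : nat) :
  dag_network e w r alpha -> max_path_len e d -> (0 < d)%N ->
  forall (t : nat), (d <= t)%N -> forall x : {ffun 'I_n -> bool},
    law e w r alpha t x = stationary e w r alpha x /\
    law e w r alpha t x = formula e w r alpha d x.
Proof.
move=> Hnet Hmax d0 t dt x.
have F := @final R n e w r alpha d Hnet Hmax d0.
split; last exact: F.
rewrite /stationary F //; apply/esym/norm_lim_near_cst.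
exists d => // s /= ds; exact: F.
Qed.
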